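(* Let agent $i\in[A]$ satisfy condition (M). Then for every initial condition $X(0)\in\mathbb{N}^A$, $$\prod_{j\ne i}\exp\Big\{-F_j(X_j(0))\sum_{k=X_i(0)}^{\infty}\frac{1}{F_i(k)}\Big\}\;\le\;\mathbb{P}(tMon_i)\;\le\;\prod_{j\ne i}\exp\Big\{-c\,F_j(X_j(0))\sum_{k=X_i(0)}^{\infty}\frac{1}{F_i(k)}\Big\},$$ where $$c:=\inf_{k\in\mathbb{N}_0}\frac{F_i(X_i(0)+k)}{F_i(X_i(0)+k)+\sum_{j\ne i}F_j(X_j(0))}>0 .$$
   Context: Fix $A\ge 2$, $[A]=\{1,\dots,A\}$, and feedback functions $F_i:\mathbb{N}=\{1,2,\dots\}\to(0,\infty)$, $i\in[A]$. The generalized Pólya urn is the Markov chain $X(n)=(X_1(n),\dots,X_A(n))$, $n\in\mathbb{N}_0$, on $\mathbb{N}^A$ with initial condition $X(0)$ (all $X_i(0)\ge1$) and transition probabilities $\mathbb{P}(X(n+1)=X(n)+e^{(i)}\mid X(n))=F_i(X_i(n))/\sum_{j=1}^AF_j(X_j(n))$, where $e^{(i)}$ is the $i$-th unit vector. Total monopoly of agent $i$ is the event $tMon_i=\{\forall n\ge0\ \forall j\ne i: X_j(n)=X_j(0)\}$. Agent $i$ satisfies condition (M) if $\sum_{k=1}^\infty 1/F_i(k)<\infty$. *)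

(* Defs.v *)
From HB Require Import structures.
From mathcomp Require Import all_boot all_order all_algebra.
From mathcomp Require Import all_classical all_reals all_analysis.
Set Implicit Arguments. Unset Strict Implicit. Unset Printing Implicit Defensive.
Import Order.TTheory GRing.Theory Num.Theory.
Local Open Scope ring_scope.
Local Open Scope classical_set_scope.

Notation urn_state A := {ffun 'I_A -> nat}.

Definition urn_bump (A : nat) (x : urn_state A) (i : 'I_A) : urn_state A :=
  [ffun j => x j + (j == i)%N].

Definition urn_trans (R : realType) (A : nat) (F : 'I_A -> nat -> R)
    (x y : urn_state A) : R :=
  \sum_(i < A) (if y == urn_bump x i
                then F i (x i) / \sum_(j < A) F j (x j) else 0).

(* X is (a realisation on the probability space (T,P) of) the generalized
   Polya urn with feedback functions F and deterministic initial condition x0: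
   the events {X n = y} are measurable, X 0 = x0 almost surely, and the
   finite-dimensional laws are given by the transition probabilities
   (this is the Markov property with the prescribed transition kernel). *)
Definition is_polya_urn (d : measure_display) (T : measurableType d)
    (R : realType) (P : probability T R) (A : nat) (F : 'I_A -> nat -> R)
    (x0 : urn_state A) (X : nat -> T -> urn_state A) : Prop :=
  [/\ (forall n y, measurable [set w | X n w = y]),
      P [set w | X 0%N w = x0] = 1%E &
      (forall (n : nat) (path : nat -> urn_state A),
          P [set w | forall m, (m <= n.+1)%N -> X m w = path m]
          = (P [set w | forall m, (m <= n)%N -> X m w = path m]
             * (urn_trans F (path n) (path n.+1))%:E)%E)].

Definition tMon (T : Type) (A : nat) (X : nat -> T -> urn_state A) (i : 'I_A)
  : set T :=
  [set w | forall (n : nat) (j : 'I_A), j != i -> X n w j = X 0%N w j].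

Definition condM (R : realType) (f : nat -> R) : Prop :=
  (\sum_(1 <= k <oo) ((f k)^-1)%:E < +oo)%E.

Definition tail_inv_sum (R : realType) (f : nat -> R) (m : nat) : R :=
  (\big[+%R/0%R]_(m <= k <oo) (f k)^-1)%R.

(* Main.v *)
Require Import Defs.
From HB Require Import structures.
From mathcomp Require Import all_boot all_order all_algebra.
From mathcomp Require Import all_classical all_reals all_analysis.
From mathcomp Require Import ring lra zify.
Import Order.TTheory GRing.Theory Num.Theory.
Local Open Scope ring_scope.
Local Open Scope classical_set_scope.
Import numFieldNormedType.Exports.
Set Implicit Arguments. Unset Strict Implicit. Unset Printing Implicit Defensive.

Lemma ineq_lower (R : realType) (S f : R) : 0 < f -> 0 <= S ->
  expR (- (S / f)) <= f / (f + S).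
Proof.
move=> f0 S0.
have h := expR_ge1Dx (S / f).
have e0 := expR_gt0 (- (S / f)).
have ee : expR (- (S / f)) * expR (S / f) = 1 by rewrite -expRD addNr expR0.
rewrite ler_pdivlMr; last lra.
have -> : f + S = f * (1 + S / f) by by field; rewrite gt_eqF.
rewrite mulrA [_ * f]mulrC -mulrA.
rewrite -[X in _ <= X]mulr1 ler_pM2l //.
by rewrite -[X in _ <= X]ee ler_pM2l.
Qed.

Lemma ineq_upper (R : realType) (S f c : R) : 0 < f -> 0 <= S ->
  c <= f / (f + S) -> f / (f + S) <= expR (- (c * S / f)).
Proof.
move=> f0 S0 cle.
have fS : 0 < f + S by lra.
have h := expR_ge1Dx (- (S / (f + S))).
apply: le_trans (_ : expR (- (S / (f + S))) <= _).
  apply: le_trans h; rewrite le_eqVlt; apply/orP; left; apply/eqP; field.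
  by rewrite gt_eqF.
rewrite ler_expR lerN2.
have -> : S / (f + S) = (S / f) * (f / (f + S)) by field; rewrite ?gt_eqF.
have hp : 0 <= S / f by rewrite divr_ge0 // ltW.
have := ler_wpM2l hp cle.
move=> H; apply: le_trans H; rewrite le_eqVlt; apply/orP; left; apply/eqP; by field; rewrite gt_eqF.
Qed.

Lemma tail_facts (R : realType) (f : nat -> R) (m0 : nat) :
  (0 < m0)%N -> (forall k, (0 < k)%N -> 0 < f k) -> condM f ->
  (forall n, \sum_(k < n) (f (m0 + k)%N)^-1 <= tail_inv_sum f m0) /\
  (fun n => \sum_(k < n) (f (m0 + k)%N)^-1) @ \oo --> tail_inv_sum f m0.
Proof.
move=> m0p fp hM.
pose s := fun N => \sum_(m0 <= k < N) (f k)^-1.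
have sE n : \sum_(k < n) (f (m0 + k)%N)^-1 = s (n + m0)%N.
  under eq_bigr do rewrite addnC.
  by rewrite /s (big_addn 0 (n + m0) m0) addnK big_mkord.
have snd : nondecreasing_seq s.
  apply/nondecreasing_seqP => n; rewrite /s.
  have [mn|nm] := leqP m0 n.
    rewrite big_nat_recr //= lerDl invr_ge0 ltW // fp //.
    exact: leq_trans mn.
  by rewrite big_geq ?(ltnW nm) // big_geq.
have ub : has_ubound (range s).
  have hfin : (\sum_(1 <= k <oo) ((f k)^-1)%:E)%E \is a fin_num.
    rewrite ge0_fin_numE //.
    by apply: nneseries_ge0 => k k1 _; rewrite lee_fin invr_ge0 ltW // fp.
  exists (fine (\sum_(1 <= k <oo) ((f k)^-1)%:E)%E) => _ [N _ <-].
  rewrite -lee_fin fineK // /s -sumEFin.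
  rewrite (nneseries_split _ (m0 - 1)); last first.
    by move=> k k1; rewrite lee_fin invr_ge0 ltW // fp.
  rewrite add1n subn1 prednK //.
  apply: le_trans (_ : (\sum_(m0 <= k <oo) ((f k)^-1)%:E)%E <= _)%E.
    apply: nneseries_lim_ge => k k1 _.
    by rewrite lee_fin invr_ge0 ltW // fp // (leq_trans m0p).
  rewrite leeDr // sumEFin lee_fin big_nat_cond sumr_ge0 // => k /andP[/andP[k1 _] _].
  by rewrite invr_ge0 ltW // fp.
have cs : cvgn s by apply: nondecreasing_is_cvgn.
have TE : tail_inv_sum f m0 = limn s by [].
split.
  by move=> n; rewrite sE TE; apply: nondecreasing_cvgn_le.
have -> : (fun n => \sum_(k < n) (f (m0 + k)%N)^-1) = [sequence s (n + m0)%N]_n.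
  by apply: funext => n; rewrite sE.
by rewrite cvg_shiftn TE.
Qed.

Lemma c_facts (R : realType) (h : nat -> R) (S B : R) : 0 <= S ->
  (forall k, 0 < h k) -> (forall k, (h k)^-1 <= B) ->
  0 < inf [set h k / (h k + S) | k in [set: nat]] /\
  forall k, inf [set h k / (h k + S) | k in [set: nat]] <= h k / (h k + S).
Proof.
move=> S0 hp hB.
have B0 : 0 <= B by apply: le_trans (hB 0%N); rewrite invr_ge0 ltW.
have L0 : 0 < (1 + S * B)^-1 by rewrite invr_gt0; nra.
have lb : forall k, (1 + S * B)^-1 <= h k / (h k + S).
  move=> k; have hk := hp k; have hBk := hB k.
  rewrite ler_pdivlMr; last nra.
  rewrite mulrC ler_pdivrMr; last nra.
  have : 1 <= h k * B.
    by rewrite -(mulfV (lt0r_neq0 hk)) ler_pM2l.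
  nra.
split.
  apply: lt_le_trans L0 _; apply: lb_le_inf.
    by exists (h 0%N / (h 0%N + S)), 0%N.
  by move=> _ [k _ <-]; apply: lb.
move=> k; apply: ge_inf; last by exists k.
by exists 0 => _ [j _ <-]; apply: le_trans (lb j); apply: ltW.
Qed.

Definition upath {A : nat} (x0 : urn_state A) (i : 'I_A) (m : nat) : urn_state A :=
  [ffun j => (x0 j + (if j == i then m else 0))%N].

Lemma upath0 (A : nat) (x0 : urn_state A) i : upath x0 i 0%N = x0.
Proof. by apply/ffunP => j; rewrite ffunE; case: ifP; rewrite addn0. Qed.

Lemma upathS (A : nat) (x0 : urn_state A) i m :
  upath x0 i m.+1 = urn_bump (upath x0 i m) i.
Proof.
apply/ffunP => j; rewrite !ffunE; case: (j == i) => /=. all: lia.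
Qed.

Lemma upath_ne (A : nat) (x0 : urn_state A) i m j : j != i -> upath x0 i m j = x0 j.
Proof. by move=> ji; rewrite ffunE (negbTE ji) addn0. Qed.

Lemma upath_i (A : nat) (x0 : urn_state A) i m : upath x0 i m i = (x0 i + m)%N.
Proof. by rewrite ffunE eqxx. Qed.

Lemma bump_at (A : nat) (x : urn_state A) k j : urn_bump x k j = (x j + (j == k))%N.
Proof. by rewrite ffunE. Qed.

Lemma bump_inj (A : nat) (x : urn_state A) : injective (urn_bump x).
Proof.
move=> k l e; have := congr1 (fun y : urn_state A => y k) e => /=.
rewrite !bump_at eqxx => /eqP; rewrite eqn_add2l eq_sym => /eqP.
by case: eqP.
Qed.

Lemma trans_bump (R : realType) (A : nat) (F : 'I_A -> nat -> R) (x : urn_state A) k :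
  urn_trans F x (urn_bump x k) = F k (x k) / \sum_(j < A) F j (x j).
Proof.
rewrite /urn_trans (bigD1 k) //= eqxx.
rewrite [X in _ + X = _]big1 ?addr0 // => l lk.
case: eqP => // /bump_inj e.
by rewrite e eqxx in lk.
Qed.

Lemma sum_trans_bump (R : realType) (A : nat) (F : 'I_A -> nat -> R) (x : urn_state A) :
  \sum_(j < A) F j (x j) != 0 ->
  \sum_(k < A) urn_trans F x (urn_bump x k) = 1.
Proof.
move=> h.
under eq_bigr do rewrite trans_bump.
by rewrite -mulr_suml mulfV.
Qed.

Lemma meas_pair (A : nat) (d : measure_display) (T : measurableType d)
  (X : nat -> T -> urn_state A)
  (hXm : forall n y, measurable [set w | X n w = y])
  (Q : urn_state A -> urn_state A -> Prop) (n m : nat) :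
  measurable [set w | Q (X n w) (X m w)].
Proof.
have -> : [set w | Q (X n w) (X m w)] = \bigcup_(k in [set: nat])
   [set w | exists yz : urn_state A * urn_state A,
      [/\ unpickle k = Some yz, Q yz.1 yz.2, X n w = yz.1 & X m w = yz.2]].
  apply/seteqP; split => w /=.
    move=> q; exists (pickle (X n w, X m w)) => //.
    by exists (X n w, X m w); split; rewrite ?pickleK.
  by move=> [k _ [yz [_ q -> ->]]].
apply: bigcupT_measurable => k.
case: (unpickle k) => [yz|]; last first.
  have -> : [set w | exists yz : urn_state A * urn_state A,
      [/\ @None (urn_state A * urn_state A) = Some yz, Q yz.1 yz.2, X n w = yz.1 & X m w = yz.2]] = set0.
    by apply/seteqP; split => w //= [yz [] ].
  exact: measurable0.
have [q|nq] := pselect (Q yz.1 yz.2).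
  have -> : [set w | exists yz0 : urn_state A * urn_state A,
      [/\ Some yz = Some yz0, Q yz0.1 yz0.2, X n w = yz0.1 & X m w = yz0.2]] =
      [set w | X n w = yz.1] `&` [set w | X m w = yz.2].
    apply/seteqP; split => w /=.
      by move=> [yz0 [[<-] _ -> ->]].
    by move=> [h1 h2]; exists yz.
  by apply: measurableI.
have -> : [set w | exists yz0 : urn_state A * urn_state A,
      [/\ Some yz = Some yz0, Q yz0.1 yz0.2, X n w = yz0.1 & X m w = yz0.2]] = set0.
  by apply/seteqP; split => w //= [yz0 [[<-] ? _ _]].
exact: measurable0.
Qed.

Section urn.
Variables (A : nat) (R : realType) (F : 'I_A -> nat -> R) (i : 'I_A).
Variables (d : measure_display) (T : measurableType d) (P : probability T R).
Variables (x0 : urn_state A) (X : nat -> T -> urn_state A).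
Hypothesis hF : forall j k, (0 < k)%N -> 0 < F j k.
Hypothesis hx0 : forall j, (0 < x0 j)%N.
Hypothesis hX : is_polya_urn P F x0 X.

Local Notation p := (upath x0 i).
Definition SS := \sum_(j < A | j != i) F j (x0 j).
Definition rr m := F i (x0 i + m)%N / (F i (x0 i + m)%N + SS).

Lemma SS_ge0 : 0 <= SS.
Proof. by apply: sumr_ge0 => j _; apply: ltW; apply: hF. Qed.

Lemma Fi_gt0 m : 0 < F i (x0 i + m)%N.
Proof. by apply: hF; rewrite addn_gt0 hx0. Qed.

Lemma sumF_path m : \sum_(j < A) F j (p m j) = F i (x0 i + m)%N + SS.
Proof.
rewrite (bigD1 i) //= upath_i; congr (_ + _).
by apply: eq_bigr => j ji; rewrite upath_ne.
Qed.

Lemma sumF_gt0 m : 0 < \sum_(j < A) F j (p m j).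
Proof. by rewrite sumF_path; apply: ltr_wpDr; [exact: SS_ge0 | exact: Fi_gt0]. Qed.

Lemma trans_path m : urn_trans F (p m) (p m.+1) = rr m.
Proof. by rewrite upathS trans_bump sumF_path upath_i. Qed.

Definition EE n := [set w | forall m, (m <= n)%N -> X m w = p m].
Definition GG n := [set w | forall m, (m <= n)%N -> forall j, j != i -> X m w j = X 0%N w j].

Lemma hXm : forall n y, measurable [set w | X n w = y].
Proof. by case: hX. Qed.

Lemma mEE n : measurable (EE n).
Proof.
have -> : EE n = \bigcap_(m in [set: nat]) [set w | (m <= n)%N -> X m w = p m].
  by apply/seteqP; split => w /= h m; [move=> _|]; apply: h.
apply: bigcapT_measurable => m.
exact: (meas_pair hXm (fun y z => (m <= n)%N -> y = p m) m m).
Qed.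

Lemma mGG n : measurable (GG n).
Proof.
have -> : GG n = \bigcap_(m in [set: nat])
   [set w | (m <= n)%N -> forall j, j != i -> X m w j = X 0%N w j].
  by apply/seteqP; split => w /= h m; [move=> _|]; apply: h.
apply: bigcapT_measurable => m.
exact: (meas_pair hXm (fun y z => (m <= n)%N -> forall j, j != i -> y j = z j) m 0).
Qed.

Lemma mtMon : measurable (tMon X i).
Proof.
have -> : tMon X i = \bigcap_(m in [set: nat])
   [set w | forall j, j != i -> X m w j = X 0%N w j].
  by apply/seteqP; split => w /= h m; [move=> _|]; apply: h.
apply: bigcapT_measurable => m.
exact: (meas_pair hXm (fun y z => forall j, j != i -> y j = z j) m 0).
Qed.

Lemma PEE n : P (EE n) = (\prod_(m < n) rr m)%:E.
Proof.
elim: n => [|n IH].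
  rewrite big_ord0.
  have -> : EE 0 = [set w | X 0%N w = x0].
    apply/seteqP; split => w /=.
      by move=> h; rewrite -(upath0 x0 i); apply: h.
    by move=> h m; rewrite leqn0 => /eqP ->; rewrite upath0.
  by case: hX.
case: hX => _ _ /(_ n p) h.
by rewrite /EE h -/(EE n) IH trans_path big_ord_recr /= EFinM.
Qed.

Definition Bk n k := [set w | EE n w /\ X n.+1 w = urn_bump (p n) k].

Lemma mBk n k : measurable (Bk n k).
Proof.
have -> : Bk n k = EE n `&` [set w | X n.+1 w = urn_bump (p n) k] by [].
by apply: measurableI; [exact: mEE | exact: hXm].
Qed.

Lemma PBk n k : P (Bk n k) = (P (EE n) * (urn_trans F (p n) (urn_bump (p n) k))%:E)%E.
Proof.
pose q := fun m => if m == n.+1 then urn_bump (p n) k else p m.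
case: hX => _ _ /(_ n q) h.
have e1 : [set w | forall m, (m <= n.+1)%N -> X m w = q m] = Bk n k.
  apply/seteqP; split => w /=.
    move=> H; split; last by have := H n.+1 (leqnn _); rewrite /q eqxx.
    move=> m mn; have := H m (leqW mn); rewrite /q.
    by case: eqP => // e; move: mn; rewrite e ltnn.
  move=> [H1 H2] m; rewrite leq_eqVlt => /orP[/eqP ->|mn].
    by rewrite /q eqxx.
  rewrite /q; case: eqP => [e|_]; first by move: mn; rewrite e ltnn.
  by apply: H1.
have e2 : [set w | forall m, (m <= n)%N -> X m w = q m] = EE n.
  apply/seteqP; split => w /= H m mn; have := H m mn; rewrite /q;
  by case: eqP => // e; move: mn; rewrite e ltnn.
rewrite -e1 h e2 /q eqxx.
by rewrite (_ : (n == n.+1) = false) // eqn_leq ltnn andbF.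
Qed.

Definition BB n := \big[setU/set0]_(k < A) Bk n k.

Lemma mBB n : measurable (BB n).
Proof. by apply: bigsetU_measurable => k _; exact: mBk. Qed.

Lemma BB_sub n : BB n `<=` EE n.
Proof.
apply: (big_ind (fun S => S `<=` EE n)) => //.
- by move=> S1 S2 h1 h2 w [/h1|/h2].
- by move=> k _ w [].
Qed.

Lemma PBB n : P (BB n) = P (EE n).
Proof.
have h := @measure_bigsetU_ord_cond _ _ _ P A xpredT (Bk n).
rewrite /BB h //; last 2 first.
- by move=> k _; exact: mBk.
- move=> k l _ _ [w [[_ e1] [_ e2]]].
  by apply: (@bump_inj _ (p n)); rewrite -e1 -e2.
rewrite (eq_bigr (fun k => (P (EE n) * (urn_trans F (p n) (urn_bump (p n) k))%:E)%E)); last first.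
  by move=> k _; exact: PBk.
rewrite PEE.
rewrite (eq_bigr (fun k => ((\prod_(m < n) rr m) * urn_trans F (p n) (urn_bump (p n) k))%:E)) //.
rewrite sumEFin -mulr_sumr sum_trans_bump ?mulr1 //.
exact: lt0r_neq0 (sumF_gt0 n).
Qed.

Lemma PEE_fin n : P (EE n) \is a fin_num.
Proof. by rewrite PEE. Qed.

Lemma sub_same (x y : \bar R) : y = x -> x \is a fin_num -> (x - y = 0)%E.
Proof. by move=> -> h; rewrite subee. Qed.

Lemma PEE_lt n : (P (EE n) < +oo)%E.
Proof. by rewrite PEE ltry. Qed.

Lemma PN n : P (EE n `\` BB n) = 0%E.
Proof.
apply: (eq_trans (measureD (mEE n) (mBB n) (PEE_lt n))).
rewrite setIidr; last exact: BB_sub.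
by apply: sub_same; [exact: PBB | exact: PEE_fin].
Qed.

Lemma EG n : EE n `<=` GG n.
Proof.
move=> w H m mn j ji.
by rewrite (H m mn) (H 0%N (leq0n _)) !upath_ne.
Qed.

Lemma tMonG n : tMon X i `<=` GG n.
Proof. by move=> w H m _; apply: H. Qed.

Lemma BB_mem n w : BB n w -> exists k, Bk n k w.
Proof.
apply: (big_ind (fun S : set T => S w -> exists k, Bk n k w)) => //.
- by move=> S1 S2 h1 h2 [/h1|/h2].
- by move=> k _ h; exists k.
Qed.

Lemma PGG n : P (GG n) = P (EE n).
Proof.
elim: n => [|n IH].
  have -> : GG 0 = setT.
    apply/seteqP; split => // w _ m; rewrite leqn0 => /eqP -> //.
  by rewrite probability_setT PEE big_ord0.
apply/eqP; rewrite eq_le; apply/andP; split; last first.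
  by apply: le_measure; rewrite ?inE; [exact: mEE|exact: mGG|exact: EG].
have sub : GG n.+1 `<=` ((GG n `\` EE n) `|` EE n.+1) `|` (EE n `\` BB n).
  move=> w Hw.
  have Hn : GG n w by move=> m mn; apply: Hw; exact: leqW.
  have [hE|hE] := pselect (EE n w); last by left; left.
  have [hB|hB] := pselect (BB n w); last by right.
  left; right.
  have [k [_ hk]] := BB_mem hB.
  have [ki|ki] := eqVneq k i.
    move=> m; rewrite leq_eqVlt => /orP[/eqP ->|mn].
      by rewrite hk ki upathS.
    exact: hE.
  exfalso.
  have := Hw n.+1 (leqnn _) k ki.
  rewrite hk (hE 0%N (leq0n _)) bump_at eqxx !upath_ne //.
  lia.
have mD1 : measurable (GG n `\` EE n) by apply: measurableD; [exact: mGG|exact: mEE].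
have mD2 : measurable (EE n `\` BB n) by apply: measurableD; [exact: mEE|exact: mBB].
have h1 : (P (GG n.+1) <= P (((GG n `\` EE n) `|` EE n.+1) `|` (EE n `\` BB n)))%E.
  apply: le_measure; rewrite ?inE; [exact: mGG | | exact: sub].
  by apply: measurableU => //; apply: measurableU => //; exact: mEE.
have h2 : (P (((GG n `\` EE n) `|` EE n.+1) `|` (EE n `\` BB n)) <=
    P ((GG n `\` EE n) `|` EE n.+1) + P (EE n `\` BB n))%E.
  by apply: measureU2 => //; apply: measurableU => //; exact: mEE.
have h3 : (P ((GG n `\` EE n) `|` EE n.+1) <= P (GG n `\` EE n) + P (EE n.+1))%E.
  by apply: measureU2 => //; exact: mEE.
have h4 : P (GG n `\` EE n) = 0%E.
  apply: (eq_trans (measureD (mGG n) (mEE n) _)).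
    by have := PEE_lt n; rewrite -IH => h; exact: h.
  rewrite setIidr; last exact: EG.
  apply: sub_same; first exact: (esym IH).
  by have := PEE_fin n; rewrite -IH => h; exact: h.
apply: le_trans h1 _; apply: le_trans h2 _; rewrite PN adde0.
by apply: le_trans h3 _; rewrite h4 add0e.
Qed.

Lemma upper n : (P (tMon X i) <= (\prod_(m < n) rr m)%:E)%E.
Proof.
rewrite -PEE -PGG.
by apply: le_measure; rewrite ?inE; [exact: mtMon|exact: mGG|exact: tMonG].
Qed.

Lemma lower b : (forall n, b <= \prod_(m < n) rr m) -> (b%:E <= P (tMon X i))%E.
Proof.
move=> hb.
have mI : measurable (\bigcap_n EE n) by apply: bigcapT_measurable => n; exact: mEE.
have cv : (P \o EE) @ \oo --> P (\bigcap_n EE n).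
  apply: nonincreasing_cvg_mu => //.
  - exact: PEE_lt.
  - exact: mEE.
  - move=> m n mn; apply/subsetPset => w H k kn; apply: H; exact: leq_trans mn.
apply: le_trans (_ : P (\bigcap_n EE n) <= _)%E; last first.
  apply: le_measure; rewrite ?inE //; first exact: mtMon.
  move=> w H n j ji.
  have := H n I n (leqnn _); have := H 0%N I 0%N (leqnn _).
  by move=> -> ->; rewrite !upath_ne.
rewrite -(cvg_lim _ cv) //.
apply: lime_ge; first by apply/cvg_ex; eexists; exact: cv.
by near=> n; rewrite /= PEE lee_fin.
Unshelve. all: by end_near.
Qed.
End urn.

Unset Implicit Arguments.

Theorem mainTheorem1 (A : nat) (hA : (2 <= A)%N) (R : realType)
    (F : 'I_A -> nat -> R) (hF : forall j k, (0 < k)%N -> 0 < F j k)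
    (i : 'I_A) (hM : condM (F i))
    (d : measure_display) (T : measurableType d) (P : probability T R)
    (x0 : urn_state A) (hx0 : forall j, (0 < x0 j)%N)
    (X : nat -> T -> urn_state A) (hX : is_polya_urn P F x0 X) :
  let S := \sum_(j < A | j != i) F j (x0 j) in
  let c := inf [set F i (x0 i + k)%N / (F i (x0 i + k)%N + S) | k in [set: nat]] in
  0 < c /\
  ((\prod_(j < A | j != i)
       expR (- (F j (x0 j) * tail_inv_sum (F i) (x0 i))))%:E
     <= P (tMon X i))%E /\
  (P (tMon X i)
     <= (\prod_(j < A | j != i)
           expR (- (c * F j (x0 j) * tail_inv_sum (F i) (x0 i))))%:E)%E.
Proof.
move=> S c.
have SE : S = SS F i x0 by [].
have Sge0 : 0 <= S by rewrite SE; exact: SS_ge0 hF hx0.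
pose h := fun k => F i (x0 i + k)%N.
have hp : forall k, 0 < h k := Fi_gt0 i hF hx0.
have [tb tc] := tail_facts (hx0 i) (hF i) hM.
set TT := tail_inv_sum (F i) (x0 i) in tb tc *.
have hB : forall k, (h k)^-1 <= TT.
  move=> k; apply: le_trans (tb k.+1); rewrite big_ord_recr /= /h lerDr.
  by apply: sumr_ge0 => m _; rewrite invr_ge0 ltW //; exact: hp.
have [c0 cle] : 0 < c /\ forall k, c <= h k / (h k + S) by exact: c_facts Sge0 hp hB.
have prodE : forall a : R,
    \prod_(j < A | j != i) expR (- (a * F j (x0 j) * TT)) = expR (- (a * S * TT)).
  move=> a; rewrite -expR_sum sumrN; congr (expR (- _)).
  by rewrite /S mulr_sumr mulr_suml.
split; first exact: c0.
split.
  have -> : \prod_(j < A | j != i) expR (- (F j (x0 j) * TT)) = expR (- (S * TT)).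
    by rewrite -[S]mul1r -prodE; apply: eq_bigr => j _; rewrite mul1r.
  apply: (lower hX) => n.
  apply: le_trans (_ : expR (- (S * \sum_(m < n) (h m)^-1)) <= _).
    by rewrite ler_expR lerN2 ler_wpM2l //; exact: tb n.
  rewrite mulr_sumr -sumrN expR_sum; apply: ler_prod => m _.
  apply/andP; split; first by rewrite ltW ?expR_gt0.
  exact: ineq_lower (hp m) Sge0.
rewrite prodE.
have hu n : (P (tMon X i) <= (expR (- (c * S * \sum_(m < n) (h m)^-1)))%:E)%E.
  apply: le_trans (upper i hF hx0 hX n) _; rewrite lee_fin.
  rewrite mulr_sumr -sumrN expR_sum; apply: ler_prod => m _.
  apply/andP; split.
    by apply: ltW; apply: divr_gt0; [exact: hp | apply: ltr_wpDr; [exact: Sge0 | exact: hp]].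
  exact: ineq_upper (hp m) Sge0 (cle m).
have fin : P (tMon X i) \is a fin_num.
  rewrite ge0_fin_numE //; apply: le_lt_trans (probability_le1 P (mtMon i hX)) _.
  exact: ltry.
rewrite -(fineK fin) lee_fin.
have cv : (fun n => expR (- (c * S * \sum_(m < n) (h m)^-1))) @ \oo --> expR (- (c * S * TT)).
  apply: (@continuous_cvg _ _ _ _ _ (fun n => - (c * S * \sum_(m < n) (h m)^-1)) expR).
    exact: continuous_expR.
  by apply: cvgN; apply: cvgMl_tmp; exact: tc.
rewrite -(cvg_lim _ cv) //; apply: limr_ge; first by apply/cvg_ex; eexists; exact: cv.
by near=> n; rewrite -lee_fin fineK //; exact: hu.
Unshelve. all: by end_near.
Qed.
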